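(* Let $a,r$ be positive integers with $r\ge 2$, let $a_n=ar^{n-1}+1$ for $n\ge 1$, and set $d=\gcd(a+1,r-1)$. (1) Suppose $d$ is odd. If $a+1$ does not divide $r-1$, then the sequence $(\Gamma(a_n,a_{n+1}))_{n\ge 1}$ is constant. If $a+1$ divides $r-1$, then $\Gamma(a_1,a_2)=1$ and $\Gamma(a_n,a_{n+1})=2$ for all $n\ge 2$. (2) If $d$ is even, then the sequence $(\Gamma(a_n,a_{n+1}))_{n\ge 2}$ alternates between $1$ and $2$.
   Context: For relatively prime positive integers $p,q$, exactly one of the equations $px+qy=\frac{(p-1)(q-1)}{2}$ (Equation 1) and $px+qy+1=\frac{(p-1)(q-1)}{2}$ (Equation 2) has a solution in nonnegative integers $(x,y)$. For positive integers $a,b$ with $d=\gcd(a,b)$, $\Gamma(a,b)=1$ if Equation 1 with $(p,q)=(a/d,b/d)$ has a nonnegative integer solution, and $\Gamma(a,b)=2$ otherwise. *)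

(* Defs.v *)
From mathcomp Require Import all_boot.
Set Implicit Arguments. Unset Strict Implicit. Unset Printing Implicit Defensive.

(* Equation 1 for coprime p q: p x + q y = (p-1)(q-1)/2 has a solution in
   nonnegative integers.  Any solution satisfies x, y <= (p-1)(q-1)/2, so the
   bounded boolean search is equivalent to the unbounded existential. *)
Definition eq1_solvable (p q : nat) : bool :=
  let N := ((p - 1) * (q - 1)) %/ 2 in
  [exists x : 'I_N.+1, exists y : 'I_N.+1, p * x + q * y == N].

Definition Gamma (a b : nat) : nat :=
  let d := gcdn a b in
  if eq1_solvable (a %/ d) (b %/ d) then 1 else 2.

Definition aseq (a r n : nat) : nat := a * r ^ (n - 1) + 1.

(* Main.v *)
Require Import Defs.
From mathcomp Require Import all_boot.
From mathcomp Require Import zify.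
From Stdlib Require Import ZArith Lia Bool.
From mathcomp Require Import all_boot.

Section ZPart.
Local Open Scope Z_scope.

Lemma parity_step (p t k m d : Z) : p*t + 1 = k*m ->
  let r := 1 + d*k in let p' := r*p - k in let m' := m + (d*p-1)*t in
  (Z.even d = false ->
   (Z.even (m - p + 1) && Z.even (r*p - r - 1 - t)) =
   (Z.even (m' - p' + 1) && Z.even (r*p' - r - 1 - t))) /\
  (Z.even d = true ->
   (Z.even (m - p + 1) && Z.even (r*p - r - 1 - t)) =
   negb (Z.even (m' - p' + 1) && Z.even (r*p' - r - 1 - t))).
Proof.
  intros H r p' m'. subst r p' m'.
  assert (He : Z.even (p*t+1) = Z.even (k*m)) by (f_equal; exact H).
  revert He.
  repeat (rewrite Z.even_add || rewrite Z.even_sub || rewrite Z.even_mul || rewrite Z.even_opp).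
  destruct (Z.even p); destruct (Z.even t); destruct (Z.even k);
    destruct (Z.even m); destruct (Z.even d); simpl; intuition discriminate.
Qed.

Lemma uniq_t (p k t m t' m' : Z) : p*t + 1 = k*m -> p*t' + 1 = k*m' ->
  0 <= t < k -> 0 <= t' < k -> t' = t.
Proof.
  intros H1 H2 Ht Ht'.
  assert (Hu : t' - t = k * (m*(t'-t) - t*(m'-m))) by nia.
  set (v := m*(t'-t) - t*(m'-m)) in *.
  destruct (Z.lt_trichotomy v 0) as [Hv|[Hv|Hv]].
  - assert (k*v <= -k) by nia. lia.
  - rewrite Hv in Hu. lia.
  - assert (k*v >= k) by nia. lia.
Qed.

Lemma key (p q r k t m N : Z) : 2 <= p -> 1 <= k -> k + 1 <= r ->
  q = r*p - k -> 0 <= t < k -> p*t + 1 = k*m -> N = ((p-1)*(q-1))/2 ->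
  (exists x y, 0 <= x /\ 0 <= y /\ p*x + q*y = N) <->
  (Z.even (m - p + 1) && Z.even (r*p - r - 1 - t)) = true.
Proof.
  intros Hp Hk Hr Hq Ht Hm HN.
  assert (Hqr : q > r - k) by nia.
  assert (HX : 2*N = (p-1)*(q-1)).
  { rewrite HN. destruct (Z.Even_or_Odd p) as [[p2 E]|[p2 E]].
    - destruct (Z.Even_or_Odd k) as [[k2 F]|[k2 F]]; [subst; lia|].
      destruct (Z.Even_or_Odd q) as [[q2 G]|[q2 G]]; [subst; lia|].
      rewrite G E. replace ((2*p2 - 1) * (2*q2 + 1 - 1)) with (((2*p2-1)*q2)*2) by ring.
      rewrite Z.div_mul; lia.
    - rewrite E. replace ((2*p2 + 1 - 1) * (q - 1)) with ((p2*(q-1))*2) by ring.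
      rewrite Z.div_mul; lia. }
  clear HN.
  split.
  - intros (x & y & Hx & Hy & E).
    remember (r*p - r - 1 - 2*x - 2*r*y) as t' eqn:Et'.
    assert (E1 : p*t' + 2*k*y = (p-1)*k - 1).
    { rewrite Et'. subst q. lia. }
    assert (E2a : 2*k*x = k*(r*p - r - 1 - t') - r*(2*k*y)) by (rewrite Et'; ring).
    assert (E2b : 2*k*y = (p-1)*k - 1 - p*t') by lia.
    rewrite E2b in E2a.
    assert (E2 : 2*k*x = t'*q + r - k) by (subst q; lia).
    assert (Ht0 : 0 <= t').
    { destruct (Z_lt_le_dec t' 0) as [Hn|Hn]; [|exact Hn].
      assert ((t'+1)*q <= 0) by (apply Z.mul_nonpos_nonneg; lia).
      assert (0 <= k*x) by (apply Z.mul_nonneg_nonneg; lia). lia. }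
    assert (Ht1 : t' < k).
    { destruct (Z_lt_le_dec t' k) as [Hn|Hn]; [exact Hn|].
      assert (p*(t'-k) >= 0) by (apply Z.le_ge, Z.mul_nonneg_nonneg; lia).
      assert (0 <= k*y) by (apply Z.mul_nonneg_nonneg; lia). lia. }
    assert (Htt : t' = t) by (apply (uniq_t p k t m t' (p-1-2*y)); auto; lia).
    assert (Hmm : k*m = k*(p - 1 - 2*y)) by (rewrite -Hm -Htt; lia).
    apply Z.mul_reg_l in Hmm; [|lia].
    apply andb_true_intro; split; apply Z.even_spec.
    + exists (-y). lia.
    + exists (x + r*y). rewrite -Htt Et'. lia.
  - intros H. apply andb_prop in H. destruct H as [H1 H2].
    apply Z.even_spec in H1. apply Z.even_spec in H2.
    destruct H1 as [u Hu]. destruct H2 as [w Hw].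
    exists (w - r*(-u)), (-u).
    assert (E1 : 2*k*(-u) = (p-1)*k - (p*t+1)).
    { replace (2*k*(-u)) with (k*(p-1-m)) by lia. rewrite Hm. ring. }
    assert (Hy : 0 <= -u).
    { destruct (Z_lt_le_dec (-u) 0) as [Hn|Hn]; [|exact Hn].
      assert (k*((-u)+1) <= 0) by (apply Z.mul_nonneg_nonpos; lia).
      assert (p*(k-1-t) >= 0) by (apply Z.le_ge, Z.mul_nonneg_nonneg; lia). lia. }
    assert (E2a : 2*k*(w - r*(-u)) = k*(r*p - r - 1 - t) - r*(2*k*(-u))) by (rewrite Hw; ring).
    rewrite E1 in E2a.
    assert (E2 : 2*k*(w - r*(-u)) = t*q + r - k) by (subst q; lia).
    assert (Hx : 0 <= w - r*(-u)).
    { destruct (Z_lt_le_dec (w - r*(-u)) 0) as [Hn|Hn]; [|exact Hn].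
      assert (t*q >= 0) by (apply Z.le_ge, Z.mul_nonneg_nonneg; lia).
      assert (k*(w - r*(-u)) <= -k) by (assert (k*((w - r*(-u))+1) <= 0) by (apply Z.mul_nonneg_nonpos; lia); lia).
      lia. }
    split; [exact Hx|split; [exact Hy|]].
    assert (2*(p*(w - r*(-u)) + q*(-u)) = 2*N).
    { rewrite HX. 
      replace (2*(p*(w - r*(-u)) + q*(-u))) with (p*(2*w) - p*2*r*(-u) + 2*q*(-u)) by ring.
      rewrite -Hw. subst q. 
      assert (E3 : (r*p-k)*(2*(-u)) = r*p*(2*(-u)) - 2*k*(-u)) by ring.
      lia. }
    lia.
Qed.

Lemma parity_step' (p t k m d r p' m' : Z) (b : bool) : p*t + 1 = k*m ->
  r = 1 + d*k -> p' = r*p - k -> m' = m + (d*p-1)*t -> Z.even d = b ->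
  (Z.even (m' - p' + 1) && Z.even (r*p' - r - 1 - t)) =
  (if b then negb (Z.even (m - p + 1) && Z.even (r*p - r - 1 - t))
   else (Z.even (m - p + 1) && Z.even (r*p - r - 1 - t))).
Proof.
  intros H Hr Hp Hm Hb. subst r p' m'.
  destruct (parity_step p t k m d H) as [H1 H2].
  destruct b.
  - rewrite (H2 Hb). now rewrite negb_involutive.
  - now rewrite (H1 Hb).
Qed.

End ZPart.

Definition Pb (P M R T : Z) : bool :=
  (Z.even (M - P + 1) && Z.even (R*P - R - 1 - T))%Z.

Fixpoint pp (c r k i : nat) : nat :=
  if i is i'.+1 then r * pp c r k i' - k else c.

Fixpoint MM (m0 d t0 c r k i : nat) : nat :=
  if i is i'.+1 then MM m0 d t0 c r k i' + (d * pp c r k i' - 1) * t0 else m0.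

Lemma pp_prop a r d c k : 2 <= r -> 0 < d -> a + 1 = c * d -> r - 1 = k * d ->
  forall i, 0 < pp c r k i /\ a * r ^ i + 1 = d * pp c r k i.
Proof.
  move=> hr hd hc hk; elim=> [|i [IH1 IH2]] /=.
  - rewrite expn0 muln1; split; nia.
  - rewrite expnS. move: IH1 IH2. set X := pp c r k i. set R := r ^ i => IH1 IH2.
    have hr' : r = k * d + 1 by lia.
    have hkX : k <= r * X by nia.
    split; first by nia.
    have E : d * (r * X - k) = r * (d * X) - k * d by nia.
    rewrite E -IH2. nia.
Qed.

Lemma pp_ge2 a r d c k i : 0 < a -> 2 <= r -> 0 < d -> a + 1 = c * d -> r - 1 = k * d ->
  0 < i -> 2 <= pp c r k i.
Proof.
  move=> ha hr hd hc hk hi.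
  have [_ E] := pp_prop a _ _ _ _ hr hd hc hk i.
  have hri : r <= r ^ i by rewrite -{1}(expn1 r) leq_pexp2l //; lia.
  have hk1 : 0 < k by nia.
  nia.
Qed.

Lemma MM_prop a r d c k t0 m0 : 2 <= r -> 0 < d -> a + 1 = c * d -> r - 1 = k * d ->
  c * t0 + 1 = k * m0 ->
  forall i, pp c r k i * t0 + 1 = k * MM m0 d t0 c r k i.
Proof.
  move=> hr hd hc hk hm; elim=> [|i IH] //=.
  have [h1 _] := pp_prop a _ _ _ _ hr hd hc hk i.
  move: IH h1. set X := pp c r k i. set M := MM m0 d t0 c r k i => IH h1.
  have hr' : r = k * d + 1 by lia.
  have hkX : k <= r * X by nia.
  have hdX : 1 <= d * X by nia.
  have e0 : r * X = X + k * (d * X) by rewrite hr' mulnDl mul1n mulnA addnC.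
  have hkk : k <= k * (d * X) by nia.
  have e1 : r * X - k = X + k * (d * X - 1) by rewrite mulnBr muln1; lia.
  have h2 : (r * X - k) * t0 = X * t0 + k * ((d * X - 1) * t0)
    by rewrite e1 mulnDl mulnA.
  rewrite h2 mulnDr -IH. lia.
Qed.

Lemma pp_cop a r d c k t0 m0 i : 2 <= r -> 0 < d -> a + 1 = c * d -> r - 1 = k * d ->
  c * t0 + 1 = k * m0 -> gcdn (pp c r k i) (pp c r k i.+1) = 1.
Proof.
  move=> hr hd hc hk hm.
  have hM := MM_prop a _ _ _ _ _ _ hr hd hc hk hm i.
  have [h1 _] := pp_prop a _ _ _ _ hr hd hc hk i.
  rewrite /=. move: hM h1. set X := pp c r k i. set M := MM m0 d t0 c r k i => hM h1.
  have hkX : k <= r * X by nia.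
  have gX := dvdn_gcdl X (r * X - k). have gY := dvdn_gcdr X (r * X - k).
  set g := gcdn X (r * X - k) in gX gY *.
  have gk : g %| k.
  { have := dvdn_sub (dvdn_mull r gX) gY.
    have -> : r * X - (r * X - k) = k by lia.
    done. }
  have := dvdn_sub (dvdn_mulr M gk) (dvdn_mulr t0 gX).
  have -> : k * M - X * t0 = 1 by lia.
  by rewrite dvdn1 => /eqP.
Qed.

Lemma Gamma_eq d X Y : 0 < d -> gcdn X Y = 1 ->
  Gamma (d * X) (d * Y) = if eq1_solvable X Y then 1 else 2.
Proof.
  move=> hd hXY. by rewrite /Gamma -muln_gcdr hXY muln1 !mulKn.
Qed.

Lemma eq1P p q : 0 < p -> 0 < q ->
  reflect (exists x y, p * x + q * y = (p - 1) * (q - 1) %/ 2) (eq1_solvable p q).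
Proof.
  move=> hp hq. rewrite /eq1_solvable /=.
  apply: (iffP idP).
  - move/existsP => [x /existsP [y /eqP E]]. by exists x, y.
  - move=> [x [y E]].
    have hx : x < ((p - 1) * (q - 1) %/ 2).+1 by nia.
    have hy : y < ((p - 1) * (q - 1) %/ 2).+1 by nia.
    apply/existsP. exists (Ordinal hx). apply/existsP. exists (Ordinal hy).
    by apply/eqP.
Qed.

Lemma eq1_Pb X Y r k t0 M : 2 <= X -> 0 < k -> k < r -> k <= r * X -> Y = r * X - k ->
  t0 < k -> X * t0 + 1 = k * M ->
  eq1_solvable X Y = Pb (Z.of_nat X) (Z.of_nat M) (Z.of_nat r) (Z.of_nat t0).
Proof.
  move=> hX hk hr hrX hY ht hM.
  have hY0 : 0 < Y by nia.
  have HN : Z.of_nat ((X - 1) * (Y - 1) %/ 2) =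
            ((Z.of_nat X - 1) * (Z.of_nat Y - 1) / 2)%Z.
  { have -> : ((Z.of_nat X - 1) * (Z.of_nat Y - 1))%Z = Z.of_nat ((X - 1) * (Y - 1)) by nia.
    zify. Z.div_mod_to_equations. lia. }
  have K := key (Z.of_nat X) (Z.of_nat Y) (Z.of_nat r) (Z.of_nat k) (Z.of_nat t0)
              (Z.of_nat M) _ ltac:(lia) ltac:(lia) ltac:(lia) ltac:(lia) ltac:(lia) ltac:(lia) HN.
  rewrite /Pb. apply Bool.eq_iff_eq_true.
  split.
  - move/(eq1P X Y (ltnW hX) hY0) => [x [y E]]. apply K.
    exists (Z.of_nat x), (Z.of_nat y). lia.
  - move=> /K [x [y [hx [hy E]]]]. apply/(eq1P X Y (ltnW hX) hY0).
    exists (Z.to_nat x), (Z.to_nat y).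
    rewrite -(Z2Nat.id x hx) -(Z2Nat.id y hy) in E. lia.
Qed.

Lemma Zeven_nat n : Z.even (Z.of_nat n) = ~~ odd n.
Proof.
  have h := odd_double_half n. rewrite -muln2 in h.
  case: (odd n) h => /= h.
  - have -> : Z.of_nat n = (Z.of_nat n./2 * 2 + 1)%Z by lia.
    by rewrite Z.even_add Z.even_mul orbT.
  - have -> : Z.of_nat n = (Z.of_nat n./2 * 2)%Z by lia.
    by rewrite Z.even_mul orbT.
Qed.

Theorem theorem1p7 (a r : nat) (ha : 0 < a) (hr : 2 <= r) :
  let d := gcdn (a + 1) (r - 1) in
  let G := fun n => Gamma (aseq a r n) (aseq a r n.+1) in
  (odd d ->
     (~~ (a + 1 %| r - 1) -> forall n, 1 <= n -> G n = G 1) /\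
     ((a + 1 %| r - 1) -> G 1 = 1 /\ forall n, 2 <= n -> G n = 2)) /\
  (~~ odd d -> forall n, 2 <= n -> G n \in [:: 1; 2] /\ G n.+1 != G n).
Proof.
  move=> d G.
  have hd : 0 < d by rewrite /d gcdn_gt0 addn1.
  set c := (a + 1) %/ d. set k := (r - 1) %/ d.
  have hc : a + 1 = c * d by rewrite /c divnK // /d dvdn_gcdl.
  have hk : r - 1 = k * d by rewrite /k divnK // /d dvdn_gcdr.
  have hk0 : 0 < k by nia.
  have hck : gcdn k c = 1.
  { have E : gcdn k c * d = d by rewrite muln_gcdl -hk -hc gcdnC.
    apply/eqP. by rewrite -(eqn_pmul2r hd) mul1n E. }
  have [t0 ht0 hdv] := Bezoutl c hk0.
  rewrite hck in hdv.
  set m0 := (1 + t0 * c) %/ k.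
  have hm0 : c * t0 + 1 = k * m0.
  { have h := divnK hdv. rewrite -/m0 in h. lia. }
  have hG : forall i, G i.+1 = if eq1_solvable (pp c r k i) (pp c r k i.+1) then 1 else 2.
  { move=> i. rewrite /G /aseq /= !subn1 /=.
    have [_ E1] := pp_prop a _ _ _ _ hr hd hc hk i.
    have [_ E2] := pp_prop a _ _ _ _ hr hd hc hk i.+1.
    rewrite E1 E2. apply: Gamma_eq => //. exact: (pp_cop a _ _ _ _ _ _ i hr hd hc hk hm0). }
  have hE : forall i, 2 <= pp c r k i -> eq1_solvable (pp c r k i) (pp c r k i.+1) =
      Pb (Z.of_nat (pp c r k i)) (Z.of_nat (MM m0 d t0 c r k i)) (Z.of_nat r) (Z.of_nat t0).
  { move=> i h2.
    have hkr : k < r by nia.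
    have hrX : r <= r * pp c r k i by rewrite leq_pmulr //; lia.
    apply: (eq1_Pb (pp c r k i) (pp c r k i.+1) r k t0 (MM m0 d t0 c r k i)).
    - exact: h2.
    - exact: hk0.
    - exact: hkr.
    - lia.
    - done.
    - exact: ht0.
    - exact: (MM_prop a _ _ _ _ _ _ hr hd hc hk hm0 i). }
  have hS : forall i,
      Pb (Z.of_nat (pp c r k i.+1)) (Z.of_nat (MM m0 d t0 c r k i.+1)) (Z.of_nat r) (Z.of_nat t0) =
      if ~~ odd d then
        ~~ Pb (Z.of_nat (pp c r k i)) (Z.of_nat (MM m0 d t0 c r k i)) (Z.of_nat r) (Z.of_nat t0)
      else Pb (Z.of_nat (pp c r k i)) (Z.of_nat (MM m0 d t0 c r k i)) (Z.of_nat r) (Z.of_nat t0).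
  { move=> i. rewrite /Pb.
    have hM := MM_prop a _ _ _ _ _ _ hr hd hc hk hm0 i.
    have [h1 _] := pp_prop a _ _ _ _ hr hd hc hk i.
    apply (parity_step' (Z.of_nat (pp c r k i)) (Z.of_nat t0) (Z.of_nat k)
             (Z.of_nat (MM m0 d t0 c r k i)) (Z.of_nat d)).
    - lia.
    - lia.
    - rewrite /=. nia.
    - rewrite /=. nia.
    - exact: Zeven_nat. }
  have hpp2 : forall i, 0 < i -> 2 <= pp c r k i.
  { move=> i hi. exact: (pp_ge2 _ _ _ _ _ _ ha hr hd hc hk hi). }
  split.
  - move=> hodd.
    have hchain : forall i, Pb (Z.of_nat (pp c r k i)) (Z.of_nat (MM m0 d t0 c r k i)) (Z.of_nat r) (Z.of_nat t0) =
                            Pb (Z.of_nat (pp c r k 0)) (Z.of_nat (MM m0 d t0 c r k 0)) (Z.of_nat r) (Z.of_nat t0).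
    { elim=> [//|i IH]. by rewrite hS hodd /= IH. }
    split.
    + move=> hndiv n hn.
      have hc2 : 2 <= c.
      { case: (ltnP 1 c) => // hle.
        have hc1 : c = 1 by clear -hc hle; nia.
        exfalso. move/negP: hndiv; apply. rewrite hc hc1 mul1n /d. exact: dvdn_gcdr. }
      have hall : forall i, 2 <= pp c r k i.
      { case=> [//|i]. exact: hpp2. }
      case: n hn => [//|i] _.
      by rewrite !hG !hE // hchain.
    + move=> hdiv.
      have hd' : d = a + 1 by rewrite /d; apply/gcdn_idPl.
      have hc1 : c = 1 by clear -hc hd'; nia.
      split.
      * rewrite (hG 0).
        have [hp1 _] := pp_prop a _ _ _ _ hr hd hc hk 1.
        have -> : eq1_solvable (pp c r k 0) (pp c r k 1) = true.
        { apply/(eq1P _ _ _ hp1); first by rewrite /= hc1.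
          exists 0, 0. rewrite /= hc1. by rewrite !muln0. }
        done.
      * move=> n hn. case: n hn => [//|i] hi.
        rewrite hG hE; last by apply: hpp2; lia.
        rewrite hchain /Pb /=.
        have hm1 : m0 = 1 by clear -hm0 hc1 ht0; nia.
        rewrite hm1 hc1 /=. done.
  - move=> hev n hn. case: n hn => [//|i] hi.
    split.
    + rewrite hG. by case: (eq1_solvable _ _).
    + rewrite !hG !hE; [|apply: hpp2; lia|apply: hpp2; lia].
      rewrite hS hev /=. by case: (Pb _ _ _ _).
Qed.
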